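(* Fix $\epsilon\in(0,1)$, $d\ge1$, and let $f$ be the binary-tree function of depth $d$ with all $p_i=\frac{1+\epsilon}{2}$; let $L=2^d$. For a non-adaptive strategy $S$ (a permutation of the $n$ edges) and input $x$, let $\mathrm{cost}^L(f,x,S)$ be the number of leaf-edge tests performed by $S$ on $x$ before $f(x)$ is determined. Then: (i) there exists a leaf-last non-adaptive strategy that minimizes $\mathbb{E}[\mathrm{cost}^L(f,x,S)\mid f(x)=1]$ over all non-adaptive strategies $S$; and (ii) for every leaf-last non-adaptive strategy $S$ attaining this minimum and every $\ell\in[L-1]$, $q_\ell(S)\ge q_{\ell+1}(S)$, where $q_\ell(S)$ denotes the probability, conditioned on $f(x)=1$, that the $\ell$-th leaf edge tested by $S$ is the first leaf edge in $S$'s order whose leaf is alive.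
   Context: Binary-tree function of depth $d$: take the complete binary tree of depth $d$ (root at depth $0$, $2^d$ leaves at depth $d$); it has $n=2^{d+1}-2$ edges, numbered $1,\dots,n$, and variable $x_i$ is associated with edge $i$. The input $x\in\{0,1\}^n$ has independent coordinates with $\Pr(x_i=1)=p_i$. A leaf is alive if $x_i=1$ for every edge $i$ on the root-to-leaf path; $f(x)=1$ iff at least one leaf is alive. A non-adaptive strategy is a fixed permutation of the edges, tested in that order until $f(x)$ is determined (i.e. until $f(x')=f(x)$ for all $x'$ agreeing with $x$ on the tested edges). Leaf edges are the edges joining a leaf to its parent; the others are internal edges. A non-adaptive strategy is leaf-last if all internal edges precede all leaf edges in its permutation. *)

(* Defs.v *)
From HB Require Import structures.
From mathcomp Require Import all_boot all_order all_algebra all_fingroup.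
Set Implicit Arguments. Unset Strict Implicit. Unset Printing Implicit Defensive.
Import Order.TTheory GRing.Theory Num.Theory.

(* Complete binary tree of depth d, heap numbering: nodes 1 .. 2^(d+1)-1,
   root 1, children of v are 2v and 2v+1, parent of v is v %/ 2.
   Each non-root node v is identified with the edge joining it to its parent;
   edge e : 'I_(nedges d) (0-based) is the edge of node e+2.
   So the n = 2^(d+1) - 2 edges are 'I_n (edge number i in the paper is e = i-1). *)
Definition nedges (d : nat) : nat := 2 ^ d.+1 - 2.

Definition node d (e : 'I_(nedges d)) : nat := e + 2.

Definition is_leaf_edge d (e : 'I_(nedges d)) : bool := 2 ^ d <= node e.

(* e' lies on the root-to-(node e) path, i.e. node e' is an ancestor-or-self of node e
   at depth >= 1 (nodes at distance k < d above a leaf) *)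
Definition on_path d (e' e : 'I_(nedges d)) : bool :=
  [exists k : 'I_d, node e %/ 2 ^ k == node e'].

Definition input d := {ffun 'I_(nedges d) -> bool}.

Definition alive d (x : input d) (e : 'I_(nedges d)) : bool :=
  [forall e' : 'I_(nedges d), on_path e' e ==> x e'].

Definition tree_fun d (x : input d) : bool :=
  [exists e : 'I_(nedges d), is_leaf_edge e && alive x e].

Section Prob.
Variable R : realFieldType.
Local Open Scope ring_scope.

Definition prob d (p : R) (x : input d) : R :=
  \prod_(i : 'I_(nedges d)) (if x i then p else 1 - p).

End Prob.

(* Non-adaptive strategy: a permutation s of the edges; position t (0-based)
   tests edge s t. *)
Definition strategy d := {perm 'I_(nedges d)}.

Definition determined d (s : strategy d) (x : input d) (k : nat) : bool :=
  [forall y : input d,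
     [forall t : 'I_(nedges d), (t < k) ==> (y (s t) == x (s t))]
     ==> (tree_fun y == tree_fun x)].

Definition nb_tests d (s : strategy d) (x : input d) : nat :=
  find (determined s x) (iota 0 (nedges d).+1).

Definition costL d (s : strategy d) (x : input d) : nat :=
  #|[set t : 'I_(nedges d) | (t < nb_tests s x) && is_leaf_edge (s t)]|.

Definition leaf_last d (s : strategy d) : Prop :=
  forall t1 t2 : 'I_(nedges d),
    ~~ is_leaf_edge (s t1) -> is_leaf_edge (s t2) -> (t1 < t2)%N.

Definition leaf_order d (s : strategy d) : seq 'I_(nedges d) :=
  [seq s t | t <- enum 'I_(nedges d) & is_leaf_edge (s t)].

Section Expect.
Variable R : realFieldType.
Local Open Scope ring_scope.

Definition Pr_f1 d (p : R) : R :=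
  \sum_(x : input d | tree_fun x) prob p x.

Definition ExpCostL1 d (p : R) (s : strategy d) : R :=
  (\sum_(x : input d | tree_fun x) prob p x * (costL s x)%:R) / Pr_f1 d p.

(* q_l(S), l >= 1: probability, conditioned on f(x) = 1, that the l-th leaf edge
   tested by S is the first leaf edge in S's order whose leaf is alive *)
Definition q_leaf d (p : R) (s : strategy d) (l : nat) : R :=
  (\sum_(x : input d | tree_fun x && (find (alive x) (leaf_order s) == l.-1)%N)
      prob p x) / Pr_f1 d p.

End Expect.

(* Main.v *)
Require Import Defs.
From HB Require Import structures.
From mathcomp Require Import all_boot all_order all_algebra all_fingroup.
From mathcomp Require Import zify lra.
Import Order.TTheory GRing.Theory Num.Theory.

Lemma idx_filter_take (T : eqType) (p : pred T) (u : T) (r : seq T) :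
  p u -> index u (filter p r) = count p (take (index u r) r).
Proof.
move=> pu; elim: r => //= x r IH.
case: (eqVneq x u) => [->|nxu] /=; first by rewrite pu /= eqxx.
case px: (p x) => /=; by rewrite ?(negPf nxu) /= IH ?px.
Qed.

Lemma card_lt_idx n (p : pred 'I_n) (u : 'I_n) : p u ->
  #|[set t : 'I_n | (t < u)%N && p t]| = index u [seq t <- enum 'I_n | p t].
Proof.
move=> pu; rewrite idx_filter_take // index_enum_ord takeEmask mask_enum_ord.
rewrite count_filter cardsE cardE /enum_mem -enumT size_filter.
rewrite (@eq_filter _ _ predT) // filter_predT; apply: eq_count => t /=.
by rewrite unfold_in /= nth_nseq andbC; case: ifP.
Qed.

Section Cost.
Variable d : nat.
Hypothesis hd : (0 < d)%N.
Local Notation n := (nedges d).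

Lemma on_path_refl (e : 'I_n) : on_path e e.
Proof. by apply/existsP; exists (Ordinal hd); rewrite /= expn0 divn1. Qed.

Lemma on_path_leaf {e' e : 'I_n} : on_path e' e -> is_leaf_edge e ->
  is_leaf_edge e' -> e' = e.
Proof.
case/existsP=> k /eqP Hk _; rewrite /is_leaf_edge -Hk /node => Hl; move: Hk; rewrite /node => Hk.
have Hlt : (e + 2 < 2 ^ d.+1)%N.
  have h1 : (val e < 2 ^ d.+1 - 2)%N := ltn_ord e.
  have h2 := expnS 2 d; have h3 : (0 < 2 ^ d)%N by rewrite expn_gt0.
  move: h1 h2 h3; generalize (2 ^ d.+1) (2 ^ d); simpl; lia.
case: k Hk Hl => [[|k] Hkd] /= Hk Hl.
  by apply: val_inj; move: Hk; rewrite expn0 divn1 => /eqP; rewrite eqn_add2r => /eqP.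
exfalso; move: Hl; rewrite leqNgt ltn_divLR ?expn_gt0 //; apply/negP/negPn.
apply: (leq_trans Hlt); rewrite -expnD leq_exp2l //; lia.
Qed.

Lemma det_n (s : strategy d) x : determined s x n.
Proof.
apply/forallP=> y; apply/implyP=> /forallP H.
suff -> : y = x by [].
apply/ffunP=> e; have := H ((s^-1)%g e); rewrite ltn_ord permKV /=; by move/eqP.
Qed.

Lemma nb_det (s : strategy d) x : determined s x (nb_tests s x).
Proof.
have hh : has (determined s x) (iota 0 n.+1).
  apply/hasP; exists n; first by rewrite mem_iota add0n ltnSn.
  exact: det_n.
have := nth_find 0 hh; rewrite nth_iota ?add0n //.
by have := has_find (determined s x) (iota 0 n.+1); rewrite hh size_iota.
Qed.

Lemma nb_le (s : strategy d) x k : (k <= n)%N -> determined s x k -> (nb_tests s x <= k)%N.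
Proof.
move=> hk dk; rewrite leqNgt; apply/negP => hlt.
have := before_find 0 hlt; rewrite nth_iota ?add0n ?dk //.
Qed.

Lemma lower (s : strategy d) x k : tree_fun x -> determined s x k ->
  exists t : 'I_n, [&& (t < k)%N, is_leaf_edge (s t) & alive x (s t)].
Proof.
move=> tfx dk.
pose y : input d := [ffun e => x e && ((s^-1)%g e < k)%N].
have ty : tree_fun y.
  suff /eqP -> : tree_fun y == tree_fun x by [].
  apply: (implyP (forallP dk y)); apply/forallP => t.
  by apply/implyP => tk; rewrite /y ffunE permK tk andbT.
case/existsP: ty => e /andP [le ae].
exists ((s^-1)%g e); rewrite permKV le /=.
have := forallP ae e; rewrite on_path_refl /= /y ffunE => /andP [_ ->] /=.
apply/forallP => e'; apply/implyP => pe; have := forallP ae e'.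
by rewrite pe /= ffunE => /andP [].
Qed.

Lemma upper (s : strategy d) x (t : 'I_n) : leaf_last s -> is_leaf_edge (s t) ->
  alive x (s t) -> determined s x t.+1.
Proof.
move=> ll lt at_; apply/forallP=> y; apply/implyP=> /forallP H.
have -> : tree_fun x by apply/existsP; exists (s t); rewrite lt.
apply/eqP/existsP; exists (s t); rewrite lt /=.
apply/forallP => e'; apply/implyP => pe.
have Hu : ((s^-1)%g e' < t.+1)%N.
  case le' : (is_leaf_edge e').
    by rewrite (on_path_leaf pe lt le') permK.
  by apply: ltnW; apply: ll; rewrite ?permKV ?le'.
have := H ((s^-1)%g e'); rewrite Hu permKV /= => /eqP ->.
by have := forallP at_ e'; rewrite pe.
Qed.

Definition P (s : strategy d) := [seq t <- enum 'I_n | is_leaf_edge (s t)].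
Definition C (s : strategy d) k := [set t : 'I_n | (t < k)%N && is_leaf_edge (s t)].
Definition F (s : strategy d) x := find (alive x) (leaf_order s).

Lemma FE (s : strategy d) (x : input d) : F s x = find (fun t => alive x (s t)) (P s).
Proof. by rewrite /F /leaf_order find_map. Qed.

Lemma card_C_succ (s : strategy d) (t : 'I_n) : is_leaf_edge (s t) -> #|C s t.+1| = (index t (P s)).+1.
Proof.
move=> lt; rewrite -(@card_lt_idx _ (fun t => is_leaf_edge (s t))) //.
have -> : C s t.+1 = t |: [set u : 'I_n | (u < t)%N && is_leaf_edge (s u)].
  apply/setP => u; rewrite !inE ltnS leq_eqVlt.
  case: (eqVneq u t) => [->|/negPf H]; first by rewrite eqxx lt.
  by move: H; rewrite -val_eqE => ->.
by rewrite cardsU1 !inE ltnn.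
Qed.

Lemma C_mono (s : strategy d) k1 k2 : (k1 <= k2)%N -> (#|C s k1| <= #|C s k2|)%N.
Proof.
move=> hk; apply: subset_leq_card; apply/subsetP => u; rewrite !inE.
by case/andP => h ->; rewrite (leq_trans h).
Qed.

Lemma cost_lb (s : strategy d) (x : input d) : tree_fun x -> ((F s x).+1 <= costL s x)%N.
Proof.
move=> tfx; have [t /and3P [tk lt at_]] := @lower s x _ tfx (nb_det s x).
apply: (@leq_trans #|C s t.+1|); last by apply: C_mono.
rewrite card_C_succ // ltnS FE /index.
by apply: sub_find => u /eqP ->.
Qed.

Lemma has_alive (s : strategy d) (x : input d) : tree_fun x -> has (fun t => alive x (s t)) (P s).
Proof.
case/existsP => e /andP [le ae]; apply/hasP; exists ((s^-1)%g e); last by rewrite permKV.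
by rewrite mem_filter permKV le mem_enum.
Qed.

Lemma cost_ll (s : strategy d) (x : input d) : leaf_last s -> tree_fun x -> costL s x = (F s x).+1.
Proof.
move=> ll tfx; apply/eqP; rewrite eqn_leq cost_lb // andbT.
have hh := has_alive s x tfx.
have [t0 _ _] := hasP hh.
have hlt : (find (fun t => alive x (s t)) (P s) < size (P s))%N by rewrite -has_find.
set t := nth t0 (P s) (find (fun t => alive x (s t)) (P s)).
have at_ : alive x (s t) := nth_find t0 hh.
have tP : t \in P s := mem_nth t0 hlt.
have lt : is_leaf_edge (s t) by move: tP; rewrite mem_filter => /andP [].
change (#|C s (nb_tests s x)| <= (F s x).+1)%N.
apply: (leq_trans (@C_mono s _ _ (@nb_le s x t.+1 (ltn_ord t) (@upper s x t ll lt at_)))).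
by rewrite card_C_succ // FE index_uniq // filter_uniq // enum_uniq.
Qed.
End Cost.
Arguments P {d} s.
Arguments F {d} s x.
Arguments C {d} s k.
Section ExMin.
Local Open Scope ring_scope.
Lemma exmin (R : realFieldType) (T : finType) (t0 : T) (f : T -> R) : exists s, forall s', f s <= f s'.
Proof.
exists [arg min_(s < t0) f s]%O.
case: arg_minP => // i _ H s'; exact: H.
Qed.

End ExMin.

Section Constr.
Variable d : nat.
Local Notation n := (nedges d).

Lemma make_ll (s0 : strategy d) (t0 : 'I_n) :
  exists s1 : strategy d, leaf_last s1 /\ leaf_order s1 = leaf_order s0.
Proof.
pose a := fun t : 'I_n => is_leaf_edge (s0 t).
pose Q1 := [seq t <- enum 'I_n | predC a t].
pose Q2 := [seq t <- enum 'I_n | a t].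
pose Q := Q1 ++ Q2.
have pQ : perm_eq Q (enum 'I_n) by rewrite perm_catC perm_filterC.
have sQ : size Q = n by rewrite (perm_size pQ) size_enum_ord.
have uQ : uniq Q by rewrite (perm_uniq pQ) enum_uniq.
pose pi := fun t : 'I_n => nth t Q t.
have piE t : pi t = nth t0 Q t by rewrite /pi (set_nth_default t0) // sQ.
have f_inj : injective (fun t => s0 (pi t)).
  move=> t u /perm_inj; rewrite !piE => /eqP; rewrite nth_uniq ?sQ // => /eqP.
  exact: val_inj.
exists (perm f_inj); split.
  move=> t1 t2; rewrite !permE.
  have key t : a (pi t) = (size Q1 <= t)%N.
    rewrite piE nth_cat; case: ltnP => h.
      have : nth t0 Q1 t \in Q1 by rewrite mem_nth.
      by rewrite mem_filter => /andP [/negPf].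
    have : nth t0 Q2 (t - size Q1) \in Q2.
      by rewrite mem_nth // -(ltn_add2l (size Q1)) subnKC // -size_cat sQ.
    by rewrite mem_filter => /andP [].
  rewrite -/(a (pi t1)) -/(a (pi t2)) !key -ltnNge.
  by move=> h1 h2; apply: leq_trans h1 h2.
have mpi : map pi (enum 'I_n) = Q.
  rewrite (eq_map piE) -[RHS](mkseq_nth t0) sQ /mkseq -val_enum_ord -map_comp.
  by [].
rewrite /leaf_order.
rewrite (@eq_map _ _ _ (fun t => s0 (pi t))); last by move=> t; rewrite permE.
rewrite (eq_filter (a2 := fun t => a (pi t))); last by move=> t; rewrite permE.
rewrite map_comp -filter_map mpi filter_cat.
rewrite -filter_predI (eq_filter (a2 := pred0)); last by move=> t /=; case: (a t).
by rewrite filter_pred0 filter_id.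
Qed.
End Constr.

Section Swap.
Variable d : nat.
Local Notation n := (nedges d).

Lemma swap_exists (s : strategy d) l : leaf_last s -> (0 < l)%N -> (l < size (P s))%N ->
  exists s2 : strategy d, leaf_last s2 /\
    forall x, (F s2 x + (F s x == l) <= F s x + (F s x == l.-1))%N.
Proof.
move=> ll; case: l => [//|k] _ lP /=.
have uP : uniq (P s) by rewrite filter_uniq // enum_uniq.
have Edr := cat_take_drop k (P s).
have sA : size (take k (P s)) = k by rewrite size_take; case: ltnP => //; lia.
case E: (drop k (P s)) Edr => [|t1 [|t2 r2]] Edr.
- by exfalso; move: (congr1 size Edr); rewrite size_cat sA /= => h; move: lP; rewrite -h; lia.
- by exfalso; move: (congr1 size Edr); rewrite size_cat sA /= => h; move: lP; rewrite -h; lia.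
set A := take k (P s) in sA Edr.
have t1P : t1 \in P s by rewrite -Edr mem_cat !inE eqxx orbT.
have t2P : t2 \in P s by rewrite -Edr mem_cat !inE eqxx !orbT.
have lt1 : is_leaf_edge (s t1) by move: t1P; rewrite mem_filter => /andP [].
have lt2 : is_leaf_edge (s t2) by move: t2P; rewrite mem_filter => /andP [].
pose s2 : strategy d := (tperm t1 t2 * s)%g.
have s2E t : s2 t = s (tperm t1 t2 t) by rewrite permM.
have leq2 t : is_leaf_edge (s2 t) = is_leaf_edge (s t).
  by rewrite s2E; case: tpermP => [->|->|]; rewrite ?lt1 ?lt2.
exists s2; split.
  by move=> u1 u2; rewrite !leq2; apply: ll.
move: uP; rewrite -Edr cat_uniq /= !negb_or => /and4P [_ /and3P [nA1 nA2 _] /andP [n12 n1r] /andP [n2r _]].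
have LO : leaf_order s = map s A ++ s t1 :: s t2 :: map s r2.
  by rewrite /leaf_order -/(P s) -Edr map_cat.
have LO2 : leaf_order s2 = map s A ++ s t2 :: s t1 :: map s r2.
  rewrite /leaf_order (eq_filter leq2) -/(P s) -Edr map_cat /=.
  rewrite !s2E tpermL tpermR; congr (_ ++ _ :: _ :: _).
    apply/eq_in_map => u uA; rewrite s2E tpermD //.
      by apply: contraNneq nA1 => ->.
    by apply: contraNneq nA2 => ->.
  apply/eq_in_map => u ur; rewrite s2E tpermD //.
    by apply: contraNneq n1r => ->.
  by apply: contraNneq n2r => ->.
move=> x; rewrite /F LO LO2 !find_cat size_map sA.
case: ifP => hA.
  have : (find (alive x) (map s A) < k)%N by rewrite -sA -(size_map s) -has_find.
  move: (find _ _) => j hj; have -> : (j == k.+1) = false by apply/negbTE; lia.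
  by rewrite addn0 leq_addr.
rewrite /=; case: (alive x (s t1)); case: (alive x (s t2)) => /=; lia.
Qed.
End Swap.
Local Open Scope ring_scope.

Theorem lemma3 (R : realFieldType) (eps : R) (d : nat) :
  0 < eps < 1 -> (1 <= d)%N ->
  let p := (1 + eps) / 2 in
  (exists s : strategy d, leaf_last s /\
     forall s' : strategy d, ExpCostL1 p s <= ExpCostL1 p s') /\
  (forall s : strategy d, leaf_last s ->
     (forall s' : strategy d, ExpCostL1 p s <= ExpCostL1 p s') ->
     forall l : nat, (1 <= l <= 2 ^ d - 1)%N -> q_leaf p s l.+1 <= q_leaf p s l).
Proof.
move=> /andP [e0 e1] hd p.
have p0 : 0 <= p by rewrite /p; lra.
have p1 : 0 <= 1 - p by rewrite /p; lra.
have prob_ge0 x : 0 <= prob p x.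
  by apply: prodr_ge0 => i _; case: (x i).
have Pr_ge0 : 0 <= Pr_f1 d p by apply: sumr_ge0 => x _.
pose Num (s : strategy d) := \sum_(x | tree_fun x) prob p x * (costL s x)%:R.
pose G (s : strategy d) := \sum_(x | tree_fun x) prob p x * ((F s x).+1)%:R.
have NumG s : leaf_last s -> Num s = G s.
  by move=> ll; apply: eq_bigr => x tf; rewrite (@cost_ll d hd s x ll tf).
have NumG_le s : G s <= Num s.
  apply: ler_sum => x tf; apply: ler_wpM2l => //; rewrite ler_nat.
  exact: (@cost_lb d hd s x tf).
have divle a b : a <= b -> a / Pr_f1 d p <= b / Pr_f1 d p.
  by move=> h; apply: ler_wpM2r => //; rewrite invr_ge0.
have n0 : (0 < nedges d)%N.
  rewrite /nedges; have h1 := expnS 2 d; have h2 : (2 <= 2 ^ d)%N.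
    by rewrite -{1}(expn1 2) leq_pexp2l.
  move: h1 h2; generalize (2 ^ d.+1)%N (2 ^ d)%N; lia.
pose t0 : 'I_(nedges d) := Ordinal n0.
split.
  have [s0 Hs0] := @exmin R _ (1%g : strategy d) (fun s => ExpCostL1 p s).
  have [s1 [ll1 lo]] := @make_ll d s0 t0.
  exists s1; split => // s'; apply: le_trans (Hs0 s').
  change (Num s1 / Pr_f1 d p <= Num s0 / Pr_f1 d p); apply: divle.
  rewrite NumG //; apply: le_trans (NumG_le s0).
  suff -> : G s1 = G s0 by exact: lexx.
  by apply: eq_bigr => x _; rewrite /F lo.
move=> s ll Hmin l /andP [l1 _].
pose N j := \sum_(x | tree_fun x && (F s x == j.-1)%N) prob p x.
change (N l.+1 / Pr_f1 d p <= N l / Pr_f1 d p).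
have Nge0 j : 0 <= N j by apply: sumr_ge0.
case: (ltnP l (size (P s))) => hl; last first.
  have -> : N l.+1 = 0.
    apply: big1 => x /andP [tf /eqP E]; exfalso.
    have : (F s x < size (P s))%N by rewrite FE -has_find (@has_alive d s x tf).
    by rewrite E /= ltnNge hl.
  by rewrite mul0r; apply: divr_ge0.
have [s2 [ll2 Hpt]] := @swap_exists d s l ll l1 hl.
have key : G s2 + N l.+1 <= G s + N l.
  rewrite /G /N !big_mkcondr -!big_split /=; apply: ler_sum => x tf.
  have conv (b : bool) : (if b then prob p x else 0) = prob p x * (b : nat)%:R.
    by case: b; rewrite ?mulr1 ?mulr0.
  rewrite !conv -!mulrDr -!natrD; apply: ler_wpM2l => //; rewrite ler_nat.
  by have := Hpt x; rewrite !addSn ltnS.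
have Hm := Hmin s2.
have [Pr0|Prne] := eqVneq (Pr_f1 d p) 0.
  by rewrite Pr0 !invr0 !mulr0.
have Prgt : 0 < Pr_f1 d p by rewrite lt_def Prne Pr_ge0.
move: Hm; change (Num s / Pr_f1 d p <= Num s2 / Pr_f1 d p -> N l.+1 / Pr_f1 d p <= N l / Pr_f1 d p).
rewrite ler_pM2r ?invr_gt0 // (NumG s ll) (NumG s2 ll2) => h.
apply: divle; lra.
Qed.
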